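(* Let $\iota_1\le\kappa_1$ and $\iota_2\le\kappa_2$ be natural numbers and let $(\iota,\kappa)=(\iota_1,\kappa_1)\wedge(\iota_2,\kappa_2)$. Then $L_{(\iota_1,\kappa_1)}\times L_{(\iota_2,\kappa_2)}\equiv_W L_{(\iota,\kappa)}$. In particular, with $L_{(0,2)}$ repeated $k\ge1$ times, the $k$-fold product $L_{(0,2)}\times\dots\times L_{(0,2)}$ is Wadge equivalent to $L_{(0,2k)}$.
   Context: For $\iota\le\kappa$, $L_{(\iota,\kappa)}\subseteq\{\iota,\dots,\kappa\}^\omega$ is the set of words in which the highest number occurring infinitely often is even. For word languages $L,M$, $L\times M=\{(x_1,y_1)(x_2,y_2)\cdots : x_1x_2\cdots\in L,\ y_1y_2\cdots\in M\}$ (words over the product alphabet). A pair $(i_1,i_2)\in\omega\times\omega$ is even if both $i_1,i_2$ are even, odd otherwise. Order $[\iota_1,\kappa_1]\times[\iota_2,\kappa_2]$ (where $[a,b]=\{a,\dots,b\}$) componentwise. For $m\in\{0,1\}$ and $n\ge m$, an alternating chain of type $(m,n)$ is a sequence $(x_m,y_m)<(x_{m+1},y_{m+1})<\dots<(x_n,y_n)$ (strict in the componentwise order) such that $(x_i,y_i)$ is even iff $i$ is even. $(\iota_1,\kappa_1)\wedge(\iota_2,\kappa_2)$ is the type of a longest alternating chain in $[\iota_1,\kappa_1]\times[\iota_2,\kappa_2]$ (this is well defined). $\equiv_W$ is mutual continuous reducibility between the Cantor-type spaces of infinite words. *)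

(* Defs.v *)
From mathcomp Require Import all_boot.
Set Implicit Arguments. Unset Strict Implicit. Unset Printing Implicit Defensive.

Definition word (A : Type) := nat -> A.

Definition continuous (A B : Type) (f : word A -> word B) : Prop :=
  forall (x : word A) (n : nat), exists m : nat, forall y : word A,
    (forall i, i < m -> y i = x i) -> forall i, i < n -> f y i = f x i.

Definition wadge_le (A B : Type) (L : word A -> Prop) (M : word B -> Prop) : Prop :=
  exists f : word A -> word B, continuous f /\ forall x, L x <-> M (f x).

Definition wadge_eq (A B : Type) (L : word A -> Prop) (M : word B -> Prop) : Prop :=
  wadge_le L M /\ wadge_le M L.

Definition letter (iota kappa : nat) := {x : nat | iota <= x <= kappa}.

Definition inf_often (iota kappa : nat) (x : word (letter iota kappa)) (m : nat) : Prop :=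
  forall N, exists n, N <= n /\ val (x n) = m.

Definition parityL (iota kappa : nat) (x : word (letter iota kappa)) : Prop :=
  exists m, inf_often x m /\ ~~ odd m /\
            (forall m', inf_often x m' -> m' <= m).

Definition prodL (A B : Type) (L : word A -> Prop) (M : word B -> Prop)
  (w : word (A * B)) : Prop :=
  L (fun n => (w n).1) /\ M (fun n => (w n).2).

Definition kprodL (A : Type) (k : nat) (L : word A -> Prop)
  (w : word {ffun 'I_k -> A}) : Prop :=
  forall j : 'I_k, L (fun n => w n j).

Definition even_pair (p : nat * nat) : bool := ~~ odd p.1 && ~~ odd p.2.

Definition pair_le (p q : nat * nat) : bool := (p.1 <= q.1) && (p.2 <= q.2).
Definition pair_lt (p q : nat * nat) : bool := pair_le p q && (p != q).

Definition alt_chain (i1 k1 i2 k2 m n : nat) (c : nat -> nat * nat) : Prop :=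
  m <= 1 /\ m <= n /\
  (forall i, m <= i <= n ->
     [/\ i1 <= (c i).1 <= k1, i2 <= (c i).2 <= k2 &
         even_pair (c i) = ~~ odd i]) /\
  (forall i, m <= i < n -> pair_lt (c i) (c i.+1)).

(* (m,n) = (i1,k1) /\ (i2,k2): the type of a longest alternating chain *)
Definition meet_type (i1 k1 i2 k2 m n : nat) : Prop :=
  (exists c, alt_chain i1 k1 i2 k2 m n c) /\
  (forall m' n' c', alt_chain i1 k1 i2 k2 m' n' c' -> n' - m' <= n - m).

(* Main.v *)
Require Import Defs.
From mathcomp Require Import all_boot.
From Stdlib Require Import Classical ClassicalEpsilon FunctionalExtensionality.
Set Implicit Arguments. Unset Strict Implicit.

Definition IO (s : nat -> nat) (m : nat) : Prop := forall N, exists n, N <= n /\ s n = m.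
Definition ParEven (s : nat -> nat) : Prop :=
  exists m, IO s m /\ ~~ odd m /\ (forall m', IO s m' -> m' <= m).
Definition IsLim (s : nat -> nat) (M : nat) : Prop :=
  IO s M /\ exists T, forall t, T <= t -> s t <= M.

Lemma limsup_ex s b : (exists T, forall t, T <= t -> s t <= b) -> exists M, IsLim s M.
Proof.
elim: b => [|b IH] [T HT].
- exists 0; split; last by exists T.
  move=> N; exists (maxn N T); split; first exact: leq_maxl.
  by apply/eqP; rewrite -leqn0 HT // leq_maxr.
- case: (classic (IO s b.+1)) => [Hio|Hnio].
  + exists b.+1; split => //; by exists T.
  + have [N HN] : exists N, forall n, N <= n -> s n <> b.+1.
    { apply: NNPP => H; apply: Hnio => N.
      apply: NNPP => H2; apply: H; exists N => n Hn E; apply: H2; by exists n. }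
    apply: IH; exists (maxn N T) => t Ht.
    have := HT t (leq_trans (leq_maxr _ _) Ht).
    rewrite leq_eqVlt => /orP[/eqP E|//].
    by case: (HN t (leq_trans (leq_maxl _ _) Ht)).
Qed.

Lemma IsLim_IO s M m' : IsLim s M -> IO s m' -> m' <= M.
Proof. move=> [_ [T HT]] /(_ T) [n [Hn <-]]; exact: HT. Qed.

Lemma IsLim_in s M : IsLim s M -> exists n, s n = M.
Proof. by move=> [/(_ 0) [n [_ E]] _]; exists n. Qed.

Lemma ParEven_iff s M : IsLim s M -> (ParEven s <-> ~~ odd M).
Proof.
move=> H; split.
- move=> [m [Hm [He Hmax]]].
  have E : m = M by apply/eqP; rewrite eqn_leq (IsLim_IO H Hm) Hmax //; case: H.
  by rewrite -E.
- move=> He; exists M; split; first by case: H.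
  split => // m'; exact: IsLim_IO.
Qed.

Fixpoint lastQ (P : nat -> bool) (t : nat) : nat :=
  if t is t'.+1 then (if P t' then t' else lastQ P t') else 0.

Lemma lastQ_ge (P : nat -> bool) u t : P u -> u < t -> u <= lastQ P t.
Proof.
move=> Pu; elim: t => [|t IH] //; rewrite ltnS leq_eqVlt => /orP[/eqP<-|ut] /=.
- by rewrite Pu.
- case: (P t); [exact: ltnW | exact: IH].
Qed.

Lemma lastQ_spec (P : nat -> bool) t : lastQ P t = 0 \/ (P (lastQ P t) /\ lastQ P t < t).
Proof.
elim: t => [|t IH] /=; first by left.
case E: (P t); first by right; rewrite E.
case: IH => [->|[H1 H2]]; [by left | right; split => //; exact: ltnW].
Qed.

Lemma lastQ_le (P : nat -> bool) t : lastQ P t <= t.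
Proof. by case: (lastQ_spec P t) => [->|[_ /ltnW]]. Qed.

Lemma lastQ_ext (P Q : nat -> bool) t : (forall u, u < t -> P u = Q u) -> lastQ P t = lastQ Q t.
Proof.
elim: t => [|t IH] //= H; rewrite H // IH // => u Hu; apply: H; exact: ltnW.
Qed.

Fixpoint wm (f : nat -> nat) (s t : nat) : nat :=
  if t is t'.+1 then (if s <= t' then maxn (wm f s t') (f t) else f t) else f 0.

Lemma wm_ge f s t u : s <= u <= t -> f u <= wm f s t.
Proof.
elim: t => [|t IH] /=.
- by case/andP=> _; rewrite leqn0 => /eqP->.
- case/andP=> su; rewrite leq_eqVlt => /orP[/eqP->|ut].
  + by case: ifP => // _; rewrite leq_maxr.
  + have st : s <= t by apply: leq_trans su ut.
    rewrite st; apply: leq_trans (leq_maxl _ _); apply: IH; by rewrite su.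
Qed.

Lemma wm_le f s t B : s <= t -> (forall u, s <= u <= t -> f u <= B) -> wm f s t <= B.
Proof.
elim: t => [|t IH] /=.
- move=> s0 H; apply: H; by rewrite s0.
- move=> st H; case: ifP => Hs.
  + rewrite geq_max; apply/andP; split.
    * apply: IH => // u /andP[su ut]; apply: H; rewrite su; exact: leq_trans ut _.
    * apply: H; by rewrite st leqnn.
  + apply: H; by rewrite st leqnn.
Qed.

Lemma wm_ext f g s t : (forall u, u <= t -> f u = g u) -> wm f s t = wm g s t.
Proof.
elim: t => [|t IH] /= H; first by rewrite H.
rewrite H // IH // => u Hu; apply: H; exact: leq_trans Hu _.
Qed.

Lemma fin_ev (I : finType) (P : I -> nat -> Prop) :
  (forall j T T', T <= T' -> P j T -> P j T') -> (forall j, exists T, P j T) -> exists T, forall j, P j T.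
Proof.
move=> Hm H.
pose f j := proj1_sig (constructive_indefinite_description _ (H j)).
exists (\max_j f j) => j; apply: (Hm j (f j)); first exact: leq_bigmax.
exact: (proj2_sig (constructive_indefinite_description _ (H j))).
Qed.

Definition prevj (f : nat -> nat) (t : nat) : nat := lastQ (fun u => f t <= f u) t.
Definition startw K (a : nat -> 'I_K -> nat) t : nat :=
  t - \max_(j < K) (t - prevj (fun u => a u j) t).
Definition winv K (a : nat -> 'I_K -> nat) t (j : 'I_K) : nat :=
  wm (fun u => a u j) (startw a t) t.

Lemma startw_le K (a : nat -> 'I_K -> nat) t : startw a t <= t.
Proof. exact: leq_subr. Qed.

Lemma startw_le_j K (a : nat -> 'I_K -> nat) t j : startw a t <= prevj (fun u => a u j) t.
Proof.
rewrite /startw.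
have H := @leq_bigmax _ (fun j => t - prevj (fun u => a u j) t) j.
apply: leq_trans (leq_sub2l t H) _.
by rewrite subKn // /prevj lastQ_le.
Qed.

Lemma startw_ge K (a : nat -> 'I_K -> nat) t N :
  N <= t -> (forall j, N <= prevj (fun u => a u j) t) -> N <= startw a t.
Proof.
move=> Nt H; rewrite /startw leq_subRL; last first.
  by apply/bigmax_leqP => j _; exact: leq_subr.
rewrite addnC -leq_subRL //; apply/bigmax_leqP => j _.
by apply: leq_sub2l; apply: H.
Qed.

Lemma window_lim K (a : nat -> 'I_K -> nat) (lo hi M : 'I_K -> nat) (r : ('I_K -> nat) -> nat) :
  0 < K -> (forall t j, lo j <= a t j <= hi j) -> (forall j, IsLim (fun t => a t j) (M j)) ->
  (forall v v', (forall j, lo j <= v j <= hi j) -> (forall j, lo j <= v' j <= hi j) ->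
     (forall j, v j <= v' j) -> r v <= r v') ->
  IsLim (fun t => r (winv a t)) (r M).
Proof.
move=> K0 Hbox Hlim Hmono.
have Mbox : forall j, lo j <= M j <= hi j.
  by move=> j; have [n <-] := IsLim_in (Hlim j); apply: Hbox.
have [T0 HT0] : exists T0, forall j t, T0 <= t -> a t j <= M j.
  apply: (fin_ev (P := fun j T => forall t, T <= t -> a t j <= M j)).
  - move=> j T T' TT' H t Ht; apply: H; exact: leq_trans Ht.
  - by move=> j; case: (Hlim j).
have large : forall N, exists T, forall t, T <= t -> N <= startw a t.
  move=> N.
  have [T HT] : exists T, forall j t, T <= t -> N <= prevj (fun u => a u j) t.
    apply: (fin_ev (P := fun j T => forall t, T <= t -> N <= prevj (fun u => a u j) t)).
    - move=> j T T' TT' H t Ht; apply: H; exact: leq_trans Ht.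
    - move=> j; have [u [Hu Eu]] := (proj1 (Hlim j)) (maxn N T0).
      exists (maxn u.+1 T0); move=> t Ht.
      apply: leq_trans (leq_trans (leq_maxl _ _) Hu) _.
      apply: lastQ_ge; last by apply: leq_trans (leq_maxl _ _) Ht.
      by rewrite Eu; apply: HT0; apply: leq_trans (leq_maxr _ _) Ht.
  exists (maxn T N); move=> t Ht; apply: startw_ge.
  - exact: leq_trans (leq_maxr _ _) Ht.
  - move=> j; apply: HT; exact: leq_trans (leq_maxl _ _) Ht.
have wbox : forall t j, lo j <= winv a t j <= hi j.
  move=> t j; apply/andP; split.
  - case/andP: (Hbox t j) => H1 _; apply: leq_trans H1 (@wm_ge (fun u => a u j) (startw a t) t t _).
    by rewrite startw_le leqnn.
  - apply: wm_le; first exact: startw_le.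
    by move=> u _; case/andP: (Hbox u j).
have [T1 HT1] : exists T1, forall t, T1 <= t -> forall j, winv a t j <= M j.
  have [T1 HT1] := large T0; exists T1; move=> t Ht j.
  apply: wm_le; first exact: startw_le.
  move=> u /andP[Hu _]; apply: HT0; exact: leq_trans (HT1 t Ht) Hu.
split; last first.
  exists T1; move=> t Ht; apply: Hmono => //; exact: HT1.
move=> N.
pose T2 := maxn T1 (maxn N (maxn T0 1)).
have T1T2 : T1 <= T2 by rewrite leq_maxl.
have NT2 : N <= T2 by rewrite /T2 (leq_trans _ (leq_maxr _ _)) // leq_maxl.
have T0T2 : T0 <= T2 by rewrite /T2 (leq_trans _ (leq_maxr _ _)) // (leq_trans _ (leq_maxr _ _)) // leq_maxl.
have T2pos : 0 < T2 by rewrite /T2 (leq_trans _ (leq_maxr _ _)) // (leq_trans _ (leq_maxr _ _)) // leq_maxr.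
have Hex : forall j, exists u, (T2 <= u) && (a u j == M j).
  move=> j; have [u [Hu Eu]] := (proj1 (Hlim j)) T2; exists u; by rewrite Hu Eu eqxx.
pose h j := ex_minn (Hex j).
have hP : forall j, T2 <= h j /\ a (h j) j = M j.
  move=> j; rewrite /h; case: ex_minnP => u /andP[H1 /eqP H2] _; by split.
have hmin : forall j u, T2 <= u -> a u j = M j -> h j <= u.
  move=> j u H1 H2; rewrite /h; case: ex_minnP => v _; apply; by rewrite H1 H2 eqxx.
have [j0 Ej0] := eq_bigmax h (ltac:(by rewrite card_ord)).
set t := \max_j h j in Ej0.
have ht : forall j, h j <= t := fun j => @leq_bigmax _ h j.
have Tt : T2 <= t by apply: leq_trans (proj1 (hP j0)) (ht j0).
have Hst : startw a t < T2.
  apply: leq_ltn_trans (startw_le_j a t j0) _.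
  rewrite /prevj /=; case: (lastQ_spec (fun u => a t j0 <= a u j0) t) => [->//|[H1 H2]].
  set p := lastQ _ _ in H1 H2 *.
  rewrite ltnNge; apply/negP => Tp.
  have ap : a p j0 = M j0.
    apply/eqP; rewrite eqn_leq HT0 /=; last exact: leq_trans T0T2 Tp.
    by rewrite -(proj2 (hP j0)) -Ej0.
  have := hmin j0 p Tp ap; rewrite -Ej0 => tp; have := leq_ltn_trans tp H2; by rewrite ltnn.
exists t; split; first exact: leq_trans NT2 Tt.
apply/eqP; rewrite eqn_leq; apply/andP; split.
- apply: Hmono => // j; apply: HT1; exact: leq_trans T1T2 Tt.
- apply: Hmono => // j; rewrite -(proj2 (hP j)); apply: wm_ge.
  rewrite ht andbT; apply: ltnW; apply: leq_trans Hst (proj1 (hP j)).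
Qed.

Lemma winv_box K (a : nat -> 'I_K -> nat) (lo hi : 'I_K -> nat) :
  (forall t j, lo j <= a t j <= hi j) -> forall t j, lo j <= winv a t j <= hi j.
Proof.
move=> Hbox t j; apply/andP; split.
- case/andP: (Hbox t j) => H1 _; apply: leq_trans H1 (@wm_ge (fun u => a u j) (startw a t) t t _).
  by rewrite startw_le leqnn.
- apply: wm_le; first exact: startw_le.
  by move=> u _; case/andP: (Hbox u j).
Qed.

Lemma mkL_pf i k : i <= k -> i <= i <= k. Proof. by move=> H; rewrite leqnn H. Qed.
Definition mkL i k (H : i <= k) (x : nat) : letter i k :=
  insubd (exist (fun x => i <= x <= k) i (mkL_pf H)) x.
Lemma val_mkL i k (H : i <= k) x : i <= x <= k -> val (mkL H x) = x.
Proof. by move=> Hx; rewrite val_insubd Hx. Qed.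

Lemma IsLim_ext s s' M : (forall t, s t = s' t) -> IsLim s M -> IsLim s' M.
Proof.
move=> E [H1 [T HT]]; split.
- move=> N; have [t [Ht Et]] := H1 N; exists t; by rewrite -E.
- exists T => t Ht; rewrite -E; exact: HT.
Qed.

Lemma upper_red (A : Type) K (comp : A -> 'I_K -> nat) (lo hi : 'I_K -> nat) m n
  (r : ('I_K -> nat) -> nat) (mn : m <= n) :
  0 < K ->
  (forall a j, lo j <= comp a j <= hi j) ->
  (forall v, (forall j, lo j <= v j <= hi j) -> m <= r v <= n) ->
  (forall v v', (forall j, lo j <= v j <= hi j) -> (forall j, lo j <= v' j <= hi j) ->
     (forall j, v j <= v' j) -> r v <= r v') ->
  (forall v, (forall j, lo j <= v j <= hi j) -> (~~ odd (r v) <-> forall j, ~~ odd (v j))) ->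
  wadge_le (fun w : word A => forall j, ParEven (fun t => comp (w t) j)) (@parityL m n).
Proof.
move=> K0 Hb Hr Hm Hp.
exists (fun w t => mkL mn (r (winv (fun u j => comp (w u) j) t))); split.
- move=> x N; exists N => y Hy i Hi; congr (mkL mn (r _)).
  apply: functional_extensionality => j; rewrite /winv.
  have Hs : startw (fun u j => comp (y u) j) i = startw (fun u j => comp (x u) j) i.
    rewrite /startw; congr (i - _); apply: eq_bigr => jj _; congr (i - _); rewrite /prevj; apply: lastQ_ext => u Hu.
    by rewrite !Hy // (ltn_trans Hu Hi).
  rewrite Hs; apply: wm_ext => u Hu; by rewrite Hy // (leq_ltn_trans Hu Hi).
- move=> w.
  set a := fun u j => comp (w u) j.
  have Hab : forall t j, lo j <= a t j <= hi j by move=> t j; apply: Hb.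
  have Hlim : forall j, exists M, IsLim (fun t => a t j) M.
    move=> j; apply: (@limsup_ex _ (hi j)); exists 0 => t _; by case/andP: (Hab t j).
  pose M j := proj1_sig (constructive_indefinite_description _ (Hlim j)).
  have HM : forall j, IsLim (fun t => a t j) (M j) :=
    fun j => proj2_sig (constructive_indefinite_description _ (Hlim j)).
  have Mbox : forall j, lo j <= M j <= hi j.
    by move=> j; have [u <-] := IsLim_in (HM j); apply: Hab.
  have HL := window_lim K0 Hab HM Hm.
  have HL' : IsLim (fun t => val (mkL mn (r (winv a t)))) (r M).
    apply: IsLim_ext HL => t; rewrite val_mkL //; apply: Hr; exact: winv_box.
  change (@parityL m n _) with (ParEven (fun t => val (mkL mn (r (winv a t))))).
  rewrite (ParEven_iff HL') (Hp M Mbox); split=> H j.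
  + by apply/(ParEven_iff (HM j)); apply: H.
  + by apply/(ParEven_iff (HM j)); apply: H.
Qed.

Lemma lower_red (B : Type) K (comp : B -> 'I_K -> nat) m n (c : nat -> B) :
  (forall i i' j, m <= i -> i <= i' -> i' <= n -> comp (c i) j <= comp (c i') j) ->
  (forall i, m <= i <= n -> ((forall j, ~~ odd (comp (c i) j)) <-> ~~ odd i)) ->
  wadge_le (@parityL m n) (fun w : word B => forall j, ParEven (fun t => comp (w t) j)).
Proof.
move=> Hm Hp; exists (fun w t => c (val (w t))); split.
- move=> x N; exists N => y Hy i Hi; by rewrite Hy.
- move=> w.
  have [M HM] : exists M, IsLim (fun t => val (w t)) M.
    apply: (@limsup_ex _ n); exists 0 => t _; by case/andP: (valP (w t)).
  have [u Eu] := IsLim_in HM.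
  have Mb : m <= M <= n by rewrite -Eu; exact: (valP (w u)).
  have HL : forall j, IsLim (fun t => comp (c (val (w t))) j) (comp (c M) j).
    move=> j; split.
    - move=> N; have [t [Ht Et]] := proj1 HM N; exists t; by rewrite Et.
    - have [T HT] := proj2 HM; exists T => t Ht; apply: Hm.
      + by case/andP: (valP (w t)).
      + exact: HT.
      + by case/andP: Mb.
  change (@parityL m n w) with (ParEven (fun t => val (w t))).
  rewrite (ParEven_iff HM) -(Hp M Mb); split=> H j.
  + by apply/(ParEven_iff (HL j)); apply: H.
  + by apply/(ParEven_iff (HL j)); apply: H.
Qed.

Lemma sum_lt (I : finType) (F G : I -> nat) j0 :
  (forall j, F j <= G j) -> F j0 < G j0 -> \sum_j F j < \sum_j G j.
Proof.
move=> H H0; rewrite (bigD1 j0) //= [X in _ < X](bigD1 j0) //=.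
apply: (@leq_ltn_trans (F j0 + \sum_(j | j != j0) G j)).
- rewrite leq_add2l; apply: leq_sum => j _; exact: H.
- by rewrite ltn_add2r.
Qed.

Definition S2 k (v : 'I_k -> nat) := \sum_(j < k) (v j == 2).
Definition r2 k (v : 'I_k -> nat) := 2 * S2 v + [exists j, v j == 1].

Lemma S2_le k (v : 'I_k -> nat) : S2 v <= k.
Proof.
rewrite /S2; apply: leq_trans (_ : \sum_(j < k) 1 <= k).
- by apply: leq_sum => j _; case: (v j == 2).
- by rewrite sum_nat_const card_ord muln1.
Qed.

Lemma S2_lt k (v : 'I_k -> nat) j0 : v j0 != 2 -> S2 v < k.
Proof.
move=> H; rewrite /S2; apply: leq_trans (_ : \sum_(j < k) 1 <= k).
- apply: (@sum_lt _ (fun j => nat_of_bool (v j == 2)) (fun _ => 1) j0).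
  + by move=> j; case: (v j == 2).
  + by rewrite (negbTE H).
- by rewrite sum_nat_const card_ord muln1.
Qed.

Lemma r2_range k (v : 'I_k -> nat) : (forall j, 0 <= v j <= 2) -> 0 <= r2 v <= 2 * k.
Proof.
move=> Hb; rewrite /r2 /=; case: existsP => [[j /eqP Hj]|_].
- have Hl : S2 v < k by apply: (@S2_lt _ _ j); rewrite Hj.
  rewrite addn1; apply: leq_trans (_ : 2 * (S2 v).+1 <= 2 * k); last by rewrite leq_mul2l.
  by rewrite mulnSr addn2.
- by rewrite addn0 leq_mul2l S2_le orbT.
Qed.

Lemma r2_mono k (v v' : 'I_k -> nat) : (forall j, 0 <= v j <= 2) -> (forall j, 0 <= v' j <= 2) ->
  (forall j, v j <= v' j) -> r2 v <= r2 v'.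
Proof.
move=> Hb Hb' Hle.
have Hj2 : forall j, (v j == 2) <= (v' j == 2).
  move=> j; case E: (v j == 2) => //; move/eqP: E => E.
  have := Hle j; rewrite E => H; have := Hb' j; rewrite /= => H'.
  by rewrite eqn_leq H H'.
have HS : S2 v <= S2 v' by apply: leq_sum => j _; exact: Hj2.
case: (ltngtP (S2 v) (S2 v')) => [lt|gt|eq].
- rewrite /r2; apply: (@leq_trans (2 * (S2 v).+1)).
  + rewrite mulnSr leq_add2l; by case: existsP.
  + apply: leq_trans (leq_addr _ _); by rewrite leq_mul2l lt orbT.
- by move: (leq_ltn_trans HS gt); rewrite ltnn.
- rewrite /r2 eq leq_add2l.
  case: (@existsP _ (fun j => v j == 1)) => [[j /eqP Hj]|]; last by [].
  rewrite /= lt0b; apply/existsP; exists j.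
  have H1 : 1 <= v' j by rewrite -Hj Hle.
  have H2 : v' j != 2.
    apply/negP => /eqP E2.
    have := @sum_lt _ (fun j => nat_of_bool (v j == 2)) (fun j => nat_of_bool (v' j == 2)) j Hj2.
    rewrite Hj E2 /= => /(_ isT); rewrite -/(S2 v) -/(S2 v') eq ltnn //.
  have := Hb' j; move: H1 H2; case: (v' j) => [|[|[|x]]] //.
Qed.

Lemma r2_par k (v : 'I_k -> nat) : (forall j, 0 <= v j <= 2) ->
  (~~ odd (r2 v) <-> forall j, ~~ odd (v j)).
Proof.
move=> Hb; rewrite /r2 oddD oddM /=; case: existsP => [[j /eqP Hj]|Hn] /=; split => //.
- by move/(_ j); rewrite Hj.
- move=> _ j; have := Hb j; case E: (v j) => [|[|[|x]]] //= _.
  by case: Hn; exists j; rewrite E.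
Qed.

Definition cv (i : nat) (j : nat) : nat :=
  if j < i./2 then 2 else if j == i./2 then nat_of_bool (odd i) else 0.

Lemma cv_box i j : 0 <= cv i j <= 2.
Proof. by rewrite /cv; case: ifP => //; case: ifP => //; case: (odd i). Qed.

Lemma cv_mono i i' j : i <= i' -> cv i j <= cv i' j.
Proof.
move=> Hi; rewrite /cv.
have Hh := half_leq Hi.
case: ltnP => H1.
- by rewrite (leq_trans H1 Hh).
- case: eqP => [E|_]; last by [].
  case: ltnP => [_|H2]; first by case: (odd i).
  have E' : j = i'./2 by apply/eqP; rewrite eqn_leq H2 E Hh.
  rewrite -E' eqxx.
  move: Hi; rewrite -{1}(odd_double_half i) -{1}(odd_double_half i') -E -E' leq_add2r.
  by case: (odd i); case: (odd i').
Qed.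

Lemma cv_par k i : i <= 2 * k -> ((forall j : 'I_k, ~~ odd (cv i j)) <-> ~~ odd i).
Proof.
move=> Hi; split.
- move=> H; apply/negP => Hodd.
  have Hlt : i./2 < k.
    have Ei := odd_double_half i; rewrite Hodd in Ei.
    by move: Hi; rewrite -{1}Ei /= mul2n ltn_double.
  have := H (Ordinal Hlt); rewrite /cv /= ltnn eqxx Hodd //.
- move=> He j; rewrite /cv; case: ifP => //; case: ifP => //; by rewrite (negbTE He).
Qed.

Lemma pair_le_refl p : pair_le p p. Proof. by rewrite /pair_le !leqnn. Qed.
Lemma pair_le_trans p q s : pair_le p q -> pair_le q s -> pair_le p s.
Proof.
rewrite /pair_le => /andP[a b] /andP[c d]; by rewrite (leq_trans a c) (leq_trans b d).
Qed.
Lemma pair_le_anti p q : pair_le p q -> pair_le q p -> p = q.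
Proof.
case: p q => [a b] [c d]; rewrite /pair_le /= => /andP[h1 h2] /andP[h3 h4].
by congr (_, _); apply/eqP; rewrite eqn_leq ?h1 ?h3 ?h2 ?h4.
Qed.
Lemma pair_lt_le_trans p q s : pair_lt p q -> pair_le q s -> pair_lt p s.
Proof.
rewrite /pair_lt => /andP[h1 h2] h3; rewrite (pair_le_trans h1 h3) /=.
apply/eqP => E; subst s; move/negP: h2; apply; apply/eqP; exact: pair_le_anti h1 h3.
Qed.
Lemma par_lt p q : pair_le p q -> even_pair p != even_pair q -> pair_lt p q.
Proof. move=> H1 H2; rewrite /pair_lt H1 /=; apply/eqP => E; by rewrite E eqxx in H2. Qed.

Definition inbox (i1 k1 i2 k2 : nat) (p : nat * nat) := (i1 <= p.1 <= k1) && (i2 <= p.2 <= k2).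

Lemma box_low i1 k1 i2 k2 p : inbox i1 k1 i2 k2 p -> pair_le (i1, i2) p.
Proof. by case/andP => /andP[a _] /andP[b _]; rewrite /pair_le a b. Qed.

Lemma chain_mono i1 k1 i2 k2 m n c : alt_chain i1 k1 i2 k2 m n c ->
  forall i i', m <= i -> i <= i' -> i' <= n -> pair_le (c i) (c i').
Proof.
move=> [_ [_ [_ Hs]]] i i' Hi; elim: i' => [|i' IH].
- by rewrite leqn0 => /eqP -> _; exact: pair_le_refl.
- rewrite leq_eqVlt => /orP[/eqP <-|Hii'] Hn; first exact: pair_le_refl.
  apply: pair_le_trans (IH Hii' (ltnW Hn)) _.
  have := Hs i'; rewrite (leq_trans Hi Hii') Hn => /(_ isT) /andP[]//.
Qed.

Lemma bottom_par i1 k1 i2 k2 m n : i1 <= k1 -> i2 <= k2 -> meet_type i1 k1 i2 k2 m n ->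
  even_pair (i1, i2) = ~~ odd m.
Proof.
move=> h1 h2 [[c0 Hc] Hmax]; move: (Hc) => [m1 [mn [Hb Hs]]].
have bbox : inbox i1 k1 i2 k2 (i1, i2) by rewrite /inbox /= leqnn h1 leqnn h2.
case: m m1 mn Hb Hs Hmax Hc => [|[|//]] m1 mn Hb Hs Hmax Hc /=.
- case Eb: (even_pair (i1, i2)) => //; exfalso.
  pose c' i := if i is i'.+2 then c0 i' else (i1, i2).
  have H : alt_chain i1 k1 i2 k2 1 n.+2 c'.
    split => //; split => //; split.
    + case => [|[|i]] //= Hi.
      * by rewrite leqnn h1 leqnn h2 Eb.
      * have := Hb i; rewrite leq0n /= -ltnS -[i < _]ltnS Hi => /(_ isT) [-> -> ->].
        by rewrite negbK.
    + case => [|[|i]] //= Hi.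
      * have := Hb 0; rewrite leq0n leq0n => /(_ isT) [B1 B2 P0].
        apply: par_lt; [apply: (box_low (k1 := k1) (k2 := k2)); by rewrite /inbox B1 B2 | by rewrite Eb P0].
      * apply: Hs; by rewrite leq0n.
  by have := Hmax _ _ _ H; rewrite subn1 subn0 /= ltnn.
- case Eb: (even_pair (i1, i2)) => //; exfalso.
  pose c' i := if i is i'.+1 then c0 i else (i1, i2).
  have H : alt_chain i1 k1 i2 k2 0 n c'.
    split => //; split => //; split.
    + case => [|i] //= Hi.
      * by rewrite leqnn h1 leqnn h2 Eb.
      * by apply: Hb.
    + case => [|i] //= Hi.
      * have := Hb 1; rewrite leqnn mn => /(_ isT) [B1 B2 P0].
        apply: par_lt; [apply: (box_low (k1 := k1) (k2 := k2)); by rewrite /inbox B1 B2 | by rewrite Eb P0].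
      * by apply: Hs.
  have := Hmax _ _ _ H; rewrite subn0 subn1 => H'.
  have Hp : n.-1 < n by rewrite ltn_predL.
  by have := leq_ltn_trans H' Hp; rewrite ltnn.
Qed.

Definition Ch i1 k1 i2 k2 m (p : nat * nat) j :=
  exists c, alt_chain i1 k1 i2 k2 m j c /\ c j = p.

Lemma Ch_ex i1 k1 i2 k2 m p : m <= 1 -> even_pair (i1, i2) = ~~ odd m ->
  inbox i1 k1 i2 k2 (i1, i2) -> inbox i1 k1 i2 k2 p -> exists j, Ch i1 k1 i2 k2 m p j.
Proof.
move=> m1 Eb bb pb; move: (pb) => /andP[P1 P2].
case E: (even_pair p == ~~ odd m).
- exists m, (fun _ => p); split => //; split => //; split => //; split.
  + move=> i /andP[a b]; have -> : i = m by apply/eqP; rewrite eqn_leq a b.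
    by rewrite P1 P2 (eqP E).
  + by move=> i /andP[a b]; move: (leq_ltn_trans a b); rewrite ltnn.
- exists m.+1, (fun i => if i == m then (i1, i2) else p); split; last by rewrite eqn_leq ltnn.
  move: (bb) => /andP[B1 B2].
  split => //; split => //; split.
  + move=> i /andP[a b]; case: eqP => [->|ne]; first by rewrite B1 B2 Eb.
    rewrite P1 P2; split => //; move/negbT: E.
    have -> : i = m.+1 by apply/eqP; rewrite eqn_leq b ltn_neqAle a andbT; apply/eqP => E'; apply: ne.
    by rewrite oddS negbK; case: (even_pair p); case: (odd m).
  + move=> i /andP[a b]; have Ei : i = m by apply/eqP; rewrite eqn_leq a -ltnS b.
    rewrite Ei eqxx (gtn_eqF (ltnSn m)).
    apply: par_lt; first exact: box_low pb.
    by rewrite Eb; move/negbT: E; rewrite eq_sym.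
Qed.

Lemma Ch_ext i1 k1 i2 k2 m p q j : Ch i1 k1 i2 k2 m p j -> inbox i1 k1 i2 k2 q -> pair_le p q ->
  exists j', j <= j' /\ Ch i1 k1 i2 k2 m q j'.
Proof.
move=> [c [[m1 [mj [Hb Hs]]] Ecj]] qb pq; move: (qb) => /andP[Q1 Q2].
have Pj : even_pair p = ~~ odd j by have := Hb j; rewrite mj leqnn => /(_ isT) [_ _]; rewrite Ecj.
case E: (even_pair q == even_pair p).
- exists j; split => //.
  exists (fun i => if i == j then q else c i); split; last by rewrite eqxx.
  split => //; split => //; split.
  + move=> i Hi; case: eqP => [->|_]; last exact: Hb.
    by rewrite Q1 Q2 (eqP E) Pj.
  + move=> i /andP[a b]; rewrite (ltn_eqF b).
    case: eqP => [Ei|_].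
    * apply: pair_lt_le_trans _ pq; rewrite -Ecj -Ei; apply: Hs; by rewrite a b.
    * apply: Hs; by rewrite a b.
- exists j.+1; split => //.
  exists (fun i => if i == j.+1 then q else c i); split; last by rewrite eqxx.
  split => //; split; first exact: leqW.
  split.
  + move=> i /andP[a b]; case: eqP => [->|ne].
    * rewrite Q1 Q2; split => //; move/negbT: E; rewrite Pj /=.
      by case: (even_pair q); case: (odd j).
    * apply: Hb; rewrite a /=; rewrite leq_eqVlt in b; case/orP: b => [/eqP//|//].
  + move=> i /andP[a b].
    have ne : (i == j.+1) = false by apply: ltn_eqF.
    rewrite ne; case: eqP => [[Ei]|ne'].
    * rewrite Ei Ecj; apply: par_lt => //; by rewrite eq_sym E.
    * apply: Hs; rewrite a /=; rewrite ltnS leq_eqVlt in b; case/orP: b => [/eqP Ei|//].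
      by case: ne'; rewrite Ei.
Qed.

Lemma Ch_le_n i1 k1 i2 k2 m n p j : meet_type i1 k1 i2 k2 m n -> Ch i1 k1 i2 k2 m p j -> j <= n.
Proof.
move=> [[c0 [_ [mn _]]] Hmax] [c [Hc _]].
by have := Hmax _ _ _ Hc; rewrite leq_sub2rE.
Qed.

Lemma bounded_max (P : nat -> Prop) n : (exists j, P j) -> (forall j, P j -> j <= n) ->
  exists j, P j /\ forall j', P j' -> j' <= j.
Proof.
elim: n => [|n IH] [j Pj] Hb.
- exists j; split => // j' Pj'; by rewrite (leq_trans (Hb _ Pj')).
- case: (classic (P n.+1)) => [Pn|nPn]; first by exists n.+1; split => // j'; apply: Hb.
  apply: IH; first by exists j.
  move=> j' Pj'; have := Hb _ Pj'; rewrite leq_eqVlt => /orP[/eqP E|//].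
  by rewrite E in Pj'.
Qed.

Lemma rank_ex i1 k1 i2 k2 m n : i1 <= k1 -> i2 <= k2 -> meet_type i1 k1 i2 k2 m n ->
  exists R : nat * nat -> nat, forall p, inbox i1 k1 i2 k2 p ->
   [/\ m <= R p <= n, ~~ odd (R p) = even_pair p &
       forall q, inbox i1 k1 i2 k2 q -> pair_le p q -> R p <= R q].
Proof.
move=> h1 h2 Hmt.
have Eb := bottom_par h1 h2 Hmt.
have m1 : m <= 1 by case: Hmt => [[c [m1 _]] _].
have bb : inbox i1 k1 i2 k2 (i1, i2) by rewrite /inbox /= leqnn h1 leqnn h2.
have Hex : forall p, exists j, inbox i1 k1 i2 k2 p ->
    Ch i1 k1 i2 k2 m p j /\ forall j', Ch i1 k1 i2 k2 m p j' -> j' <= j.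
  move=> p; case: (boolP (inbox i1 k1 i2 k2 p)) => pb.
  - have [j [Hj Hmaxj]] := bounded_max (Ch_ex m1 Eb bb pb) (fun j => @Ch_le_n _ _ _ _ _ _ _ j Hmt).
    by exists j.
  - by exists 0.
pose R p := proj1_sig (constructive_indefinite_description _ (Hex p)).
have HR : forall p, inbox i1 k1 i2 k2 p ->
    Ch i1 k1 i2 k2 m p (R p) /\ forall j', Ch i1 k1 i2 k2 m p j' -> j' <= R p.
  move=> p; exact: (proj2_sig (constructive_indefinite_description _ (Hex p))).
exists R => p pb; have [HC HM] := HR p pb.
split.
- apply/andP; split; last exact: Ch_le_n Hmt HC.
  by case: HC => c [[_ [mj _]] _].
- case: HC => c [[_ [mj [Hb _]]] Ec].
  by have := Hb (R p); rewrite mj leqnn => /(_ isT) [_ _]; rewrite Ec => ->.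
- move=> q qb pq; have [j' [Hj' Cq]] := Ch_ext HC qb pq.
  exact: leq_trans Hj' (proj2 (HR q qb) _ Cq).
Qed.

Lemma wadge_le_l A B (L L' : word A -> Prop) (M : word B -> Prop) :
  (forall w, L w <-> L' w) -> wadge_le L' M -> wadge_le L M.
Proof. move=> E [f [Hf Hr]]; exists f; split => // w; rewrite E; exact: Hr. Qed.
Lemma wadge_le_r A B (L : word A -> Prop) (M M' : word B -> Prop) :
  (forall w, M w <-> M' w) -> wadge_le L M' -> wadge_le L M.
Proof. move=> E [f [Hf Hr]]; exists f; split => // w; rewrite E; exact: Hr. Qed.

Definition j0 : 'I_2 := @Ordinal 2 0 isT.
Definition j1 : 'I_2 := @Ordinal 2 1 isT.

Lemma I2_all (P : 'I_2 -> Prop) : (forall j, P j) <-> P j0 /\ P j1.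
Proof.
split; first by move=> H; split; apply: H.
move=> [H0 H1] [[|[|x]] Hx] //.
- by have -> : Ordinal Hx = j0 by apply: val_inj.
- by have -> : Ordinal Hx = j1 by apply: val_inj.
Qed.

Definition comp2 i1 k1 i2 k2 (a : letter i1 k1 * letter i2 k2) (j : 'I_2) : nat :=
  if val j == 0 then val a.1 else val a.2.

Lemma part1 i1 k1 i2 k2 : i1 <= k1 -> i2 <= k2 -> forall m n, meet_type i1 k1 i2 k2 m n ->
  wadge_eq (prodL (@parityL i1 k1) (@parityL i2 k2)) (@parityL m n).
Proof.
move=> h1 h2 m n Hmt.
have mn : m <= n by case: Hmt => [[c [_ [mn _]]] _].
have Lequiv : forall w, prodL (@parityL i1 k1) (@parityL i2 k2) w <->
    (forall j, ParEven (fun t => comp2 (w t) j)).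
  move=> w; rewrite (I2_all (fun j => ParEven (fun t => comp2 (w t) j))); split; by case.
pose lo (j : 'I_2) := if val j == 0 then i1 else i2.
pose hi (j : 'I_2) := if val j == 0 then k1 else k2.
have boxI : forall v : 'I_2 -> nat, (forall j, lo j <= v j <= hi j) -> inbox i1 k1 i2 k2 (v j0, v j1).
  by move=> v H; rewrite /inbox /=; apply/andP; split; [apply: (H j0) | apply: (H j1)].
have [R HR] := rank_ex h1 h2 Hmt.
split.
- apply: wadge_le_l Lequiv _.
  apply: (@upper_red _ 2 (@comp2 i1 k1 i2 k2) lo hi m n (fun v => R (v j0, v j1)) mn) => //.
  + move=> a j; rewrite /comp2 /lo /hi; case: (val j == 0); [exact: (valP a.1) | exact: (valP a.2)].
  + move=> v Hv; by case: (HR _ (boxI v Hv)).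
  + move=> v v' Hv Hv' Hle; case: (HR _ (boxI v Hv)) => _ _; apply; first exact: boxI.
    by rewrite /pair_le /= !Hle.
  + move=> v Hv; case: (HR _ (boxI v Hv)) => _ -> _.
    rewrite (I2_all (fun j => ~~ odd (v j))) /even_pair /=.
    by split; [case/andP | case=> -> ->].
- apply: wadge_le_r Lequiv _.
  have [c0 Hc] := proj1 Hmt.
  apply: (@lower_red _ 2 (@comp2 i1 k1 i2 k2) m n (fun i => (mkL h1 (c0 i).1, mkL h2 (c0 i).2))).
  + move=> i i' j Hi Hii' Hi'.
    have Hin : forall i, m <= i -> i <= n -> comp2 (mkL h1 (c0 i).1, mkL h2 (c0 i).2) j = if val j == 0 then (c0 i).1 else (c0 i).2.
      move=> i'' a b; case: Hc => [_ [_ [Hb _]]]; have := Hb i''; rewrite a b => /(_ isT) [B1 B2 _].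
      by rewrite /comp2 /= !val_mkL.
    rewrite !Hin //; try exact: leq_trans Hii' Hi'; try exact: leq_trans Hi Hii'.
    have := chain_mono Hc Hi Hii' Hi'; rewrite /pair_le => /andP[a b].
    by case: (val j == 0).
  + move=> i /andP[a b]; case: Hc => [_ [_ [Hb _]]]; have := Hb i; rewrite a b => /(_ isT) [B1 B2 P].
    rewrite (I2_all (fun j => ~~ odd (comp2 _ j))) /comp2 /= !val_mkL // -P /even_pair.
    by split; [case=> -> -> | case/andP].
Qed.

Lemma le02 : 0 <= 2. Proof. by []. Qed.

Lemma part2 k : 1 <= k -> wadge_eq (@kprodL (letter 0 2) k (@parityL 0 2)) (@parityL 0 (2 * k)).
Proof.
move=> Hk; have mn : 0 <= 2 * k by [].
split.
- have H : wadge_le (fun w : word {ffun 'I_k -> letter 0 2} =>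
             forall j, ParEven (fun t => val (w t j))) (@parityL 0 (2*k)).
    refine (@upper_red _ k (fun (a : {ffun 'I_k -> letter 0 2}) j => val (a j)) (fun _ => 0) (fun _ => 2) 0 (2*k) (@r2 k) mn Hk _ _ _ _).
    + by move=> a j; exact: (valP (a j)).
    + exact: r2_range.
    + exact: r2_mono.
    + exact: r2_par.
  exact: H.
- have H : wadge_le (@parityL 0 (2*k)) (fun w : word {ffun 'I_k -> letter 0 2} =>
             forall j, ParEven (fun t => val (w t j))).
    refine (@lower_red _ k (fun (a : {ffun 'I_k -> letter 0 2}) j => val (a j)) 0 (2*k) (fun i => [ffun j : 'I_k => mkL le02 (cv i j)]) _ _).
    + move=> i i' j _ Hi _; rewrite !ffunE !val_mkL ?cv_box //; exact: cv_mono.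
    + move=> i /andP[_ Hi].
      have E : forall j, val ([ffun j : 'I_k => mkL le02 (cv i j)] j) = cv i j.
        by move=> j; rewrite ffunE val_mkL ?cv_box.
      split.
      * move=> H; apply/(cv_par Hi) => j; rewrite -E; exact: H.
      * move=> H j; rewrite E; exact: (proj2 (cv_par Hi) H j).
  exact: H.
Qed.

Theorem lemma8p2 :
  (forall i1 k1 i2 k2 : nat, i1 <= k1 -> i2 <= k2 ->
     forall m n : nat, meet_type i1 k1 i2 k2 m n ->
       wadge_eq (prodL (@parityL i1 k1) (@parityL i2 k2)) (@parityL m n)) /\
  (forall k : nat, 1 <= k ->
       wadge_eq (@kprodL (letter 0 2) k (@parityL 0 2)) (@parityL 0 (2 * k))).
Proof.
split.
- exact: part1.
- exact: part2.
Qed.
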